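(* Let $A\in M_n(\mathbb{C})$ and $1\le m\le k\le n$. Then $$\|D^m\vee^kA\|=\frac{k!}{(k-m)!}\|A\|^{k-m}.$$
   Context: $\vee^kA$ denotes the $k$-th symmetric tensor power of $A$, i.e. the restriction of $A\otimes\cdots\otimes A$ ($k$ factors) to the symmetric subspace $\vee^k\mathbb{C}^n\subseteq\otimes^k\mathbb{C}^n$. $D^m\vee^k(A)(X^1,\ldots,X^m)=\frac{\partial^m}{\partial t_1\cdots\partial t_m}\big|_{t=0}\vee^k(A+t_1X^1+\cdots+t_mX^m)$. $\|\cdot\|$ is the operator (spectral) norm, and $\|D^m\vee^kA\|=\sup_{\|X^1\|=\cdots=\|X^m\|=1}\|D^m\vee^k(A)(X^1,\ldots,X^m)\|$. *)

(* Defs.v *)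
From Stdlib Require Import Reals Lra Lia List Permutation Arith ClassicalEpsilon.
Import ListNotations.
Open Scope R_scope.

Record C := mkC { Re : R; Im : R }.
Definition C0 : C := mkC 0 0.
Definition C1 : C := mkC 1 0.
Definition Cadd (z w : C) : C := mkC (Re z + Re w) (Im z + Im w).
Definition Cmul (z w : C) : C :=
  mkC (Re z * Re w - Im z * Im w) (Re z * Im w + Im z * Re w).
Definition Cscale (r : R) (z : C) : C := mkC (r * Re z) (r * Im z).
Definition Cnorm2 (z : C) : R := Re z * Re z + Im z * Im z.

Definition Csum {A : Type} (l : list A) (f : A -> C) : C :=
  fold_right (fun x acc => Cadd (f x) acc) C0 l.
Definition Cprod {A : Type} (l : list A) (f : A -> C) : C :=
  fold_right (fun x acc => Cmul (f x) acc) C1 l.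
Definition Rsum {A : Type} (l : list A) (f : A -> R) : R :=
  fold_right (fun x acc => f x + acc) 0 l.

(* a vector of C^n is x : nat -> C (only x 0, ..., x (n-1) matter);
   a matrix of M_n(C) is A : nat -> nat -> C (only entries i,j < n matter). *)
Definition Mat := nat -> nat -> C.

Definition vnorm (n : nat) (x : nat -> C) : R :=
  sqrt (Rsum (seq 0 n) (fun i => Cnorm2 (x i))).

Definition matvec (n : nat) (A : Mat) (x : nat -> C) : nat -> C :=
  fun i => Csum (seq 0 n) (fun j => Cmul (A i j) (x j)).

Definition is_opnorm (n : nat) (A : Mat) (r : R) : Prop :=
  is_lub (fun s => exists x, vnorm n x = 1 /\ s = vnorm n (matvec n A x)) r.

(* basis of (x)^k C^n indexed by multi-indices: lists of length k with entries < n *)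
Fixpoint tuples (n k : nat) : list (list nat) :=
  match k with
  | O => [[]]
  | S k' => flat_map (fun i => map (cons i) (tuples n k')) (seq 0 n)
  end.

Definition tnorm (n k : nat) (v : list nat -> C) : R :=
  sqrt (Rsum (tuples n k) (fun I => Cnorm2 (v I))).

Definition symmetric_tensor (n k : nat) (v : list nat -> C) : Prop :=
  forall I J, In I (tuples n k) -> Permutation I J -> v I = v J.

Definition TMat := list nat -> list nat -> C.

Definition tmatvec (n k : nat) (E : TMat) (v : list nat -> C) : list nat -> C :=
  fun I => Csum (tuples n k) (fun J => Cmul (E I J) (v J)).

(* matrix entries of M (x) ... (x) M  (k factors) *)
Definition tensor_pow (k : nat) (M : Mat) : TMat :=
  fun I J => Cprod (seq 0 k) (fun p => M (nth p I O) (nth p J O)).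

(* r is the operator norm of the restriction of E to the symmetric subspace
   \/^k C^n (E is assumed to leave it invariant, as all operators below do) *)
Definition is_sym_opnorm (n k : nat) (E : TMat) (r : R) : Prop :=
  is_lub (fun s => exists v, symmetric_tensor n k v /\ tnorm n k v = 1 /\
                             s = tnorm n k (tmatvec n k E v)) r.

Definition upd (t : nat -> R) (j : nat) (s : R) : nat -> R :=
  fun i => if Nat.eqb i j then s else t i.

(* partial derivative in the coordinate t_j (chosen by epsilon; all functions
   below are polynomial in t, so these derivatives genuinely exist) *)
Definition partial (j : nat) (f : (nat -> R) -> R) : (nat -> R) -> R :=
  fun t => epsilon (inhabits 0)
             (fun l => derivable_pt_lim (fun s => f (upd t j s)) (t j) l).

Fixpoint iter_partial (m : nat) (f : (nat -> R) -> R) : (nat -> R) -> R :=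
  match m with
  | O => f
  | S m' => partial m' (iter_partial m' f)
  end.

Definition mixed_deriv_at0 (m : nat) (f : (nat -> R) -> C) : C :=
  mkC (iter_partial m (fun t => Re (f t)) (fun _ => 0))
      (iter_partial m (fun t => Im (f t)) (fun _ => 0)).

Definition perturb (m : nat) (A : Mat) (Xs : nat -> Mat) (t : nat -> R) : Mat :=
  fun i j => Cadd (A i j) (Csum (seq 0 m) (fun l => Cscale (t l) (Xs l i j))).

(* D^m \/^k (A)(X^0, ..., X^{m-1}) :
   d^m/dt_0...dt_{m-1} |_{t=0} of (x)^k (A + sum t_l X^l), entrywise;
   its restriction to the symmetric subspace is D^m \/^k (A)(X^0,...,X^{m-1}). *)
Definition D_sympow (m k : nat) (A : Mat) (Xs : nat -> Mat) : TMat :=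
  fun I J => mixed_deriv_at0 m (fun t => tensor_pow k (perturb m A Xs t) I J).

Definition is_D_sympow_norm (n m k : nat) (A : Mat) (r : R) : Prop :=
  is_lub (fun s => exists Xs : nat -> Mat,
              (forall l, (l < m)%nat -> is_opnorm n (Xs l) 1) /\
              is_sym_opnorm n k (D_sympow m k A Xs) s) r.

(* Main.v *)
Require Import Defs.
From Stdlib Require Import Reals Arith.
From Stdlib Require Import Lra Lia Psatz List Permutation ClassicalEpsilon FunctionalExtensionality Classical.
Require Import Defs.
Import ListNotations.
Open Scope R_scope.

Lemma Cext (z w : C) : Re z = Re w -> Im z = Im w -> z = w.
Proof. destruct z, w; simpl; intros; subst; reflexivity. Qed.

Section Sums.
Context {X : Type}.

Lemma Rsum_nil (f : X -> R) : Rsum [] f = 0. Proof. reflexivity. Qed.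
Lemma Rsum_cons (a : X) l f : Rsum (a :: l) f = f a + Rsum l f. Proof. reflexivity. Qed.

Lemma Rsum_app (l1 l2 : list X) f : Rsum (l1 ++ l2) f = Rsum l1 f + Rsum l2 f.
Proof. induction l1; simpl; [ring|rewrite IHl1; ring]. Qed.

Lemma Rsum_ext (l : list X) f g : (forall x, In x l -> f x = g x) -> Rsum l f = Rsum l g.
Proof. induction l; simpl; intros H; auto. rewrite H, IHl; auto. Qed.

Lemma Rsum_plus (l : list X) f g : Rsum l (fun x => f x + g x) = Rsum l f + Rsum l g.
Proof. induction l; simpl; [ring|rewrite IHl; ring]. Qed.

Lemma Rsum_scal (l : list X) c f : Rsum l (fun x => c * f x) = c * Rsum l f.
Proof. induction l; simpl; [ring|rewrite IHl; ring]. Qed.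

Lemma Rsum_le (l : list X) f g : (forall x, In x l -> f x <= g x) -> Rsum l f <= Rsum l g.
Proof. induction l; simpl; intros H; [lra|]. pose proof (H a (or_introl eq_refl)). pose proof (IHl (fun x h => H x (or_intror h))). lra. Qed.

Lemma Rsum_nonneg (l : list X) f : (forall x, In x l -> 0 <= f x) -> 0 <= Rsum l f.
Proof. intros H. replace 0 with (Rsum l (fun _ => 0)). apply Rsum_le; auto. induction l; simpl; auto. rewrite IHl; auto with real. intros; apply H; simpl; auto. Qed.

Lemma Rsum_const (l : list X) c : Rsum l (fun _ => c) = INR (length l) * c.
Proof. induction l; simpl length; [simpl; ring|]. rewrite Rsum_cons, IHl, S_INR. ring. Qed.

Lemma Rsum_nonneg_zero (l : list X) f : (forall x, In x l -> 0 <= f x) -> Rsum l f = 0 -> forall x, In x l -> f x = 0.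
Proof. induction l; simpl; intros H E x Hx; [contradiction|].
  assert (0 <= f a) by auto. assert (0 <= Rsum l f) by (apply Rsum_nonneg; auto).
  destruct Hx as [<-|Hx]; [lra|]. apply IHl; auto. lra. Qed.

Lemma Csum_cons (a : X) l f : Csum (a :: l) f = Cadd (f a) (Csum l f). Proof. reflexivity. Qed.

Lemma Re_Csum (l : list X) f : Re (Csum l f) = Rsum l (fun x => Re (f x)).
Proof. induction l; simpl; auto. rewrite IHl; auto. Qed.
Lemma Im_Csum (l : list X) f : Im (Csum l f) = Rsum l (fun x => Im (f x)).
Proof. induction l; simpl; auto. rewrite IHl; auto. Qed.

Lemma Csum_ext (l : list X) f g : (forall x, In x l -> f x = g x) -> Csum l f = Csum l g.
Proof. induction l; simpl; intros H; auto. rewrite H, IHl; auto. Qed.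

Lemma Csum_app (l1 l2 : list X) f : Csum (l1 ++ l2) f = Cadd (Csum l1 f) (Csum l2 f).
Proof. apply Cext; rewrite ?Re_Csum, ?Im_Csum; simpl; rewrite ?Re_Csum, ?Im_Csum, Rsum_app; auto. Qed.

Lemma Csum_plus (l : list X) f g : Csum l (fun x => Cadd (f x) (g x)) = Cadd (Csum l f) (Csum l g).
Proof. apply Cext; simpl; rewrite ?Re_Csum, ?Im_Csum; simpl; rewrite Rsum_plus; auto. Qed.

Lemma Csum_mul_l (l : list X) c f : Cmul c (Csum l f) = Csum l (fun x => Cmul c (f x)).
Proof. induction l; simpl.
  - apply Cext; simpl; ring.
  - rewrite <- IHl. apply Cext; simpl; ring. Qed.

Lemma Csum_zero (l : list X) : Csum l (fun _ => C0) = C0.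
Proof. induction l; simpl; auto. rewrite IHl. apply Cext; simpl; ring. Qed.

Lemma Csum_const (l : list X) z : Csum l (fun _ => z) = Cscale (INR (length l)) z.
Proof. apply Cext; simpl; rewrite ?Re_Csum, ?Im_Csum, Rsum_const; auto. Qed.
End Sums.

Lemma Rsum_map {X Y} (g : X -> Y) l f : Rsum (map g l) f = Rsum l (fun x => f (g x)).
Proof. induction l; simpl; auto. rewrite IHl; auto. Qed.
Lemma Csum_map {X Y} (g : X -> Y) l f : Csum (map g l) f = Csum l (fun x => f (g x)).
Proof. induction l; simpl; auto. rewrite IHl; auto. Qed.
Lemma Rsum_flat_map {X Y} (g : X -> list Y) l f : Rsum (flat_map g l) f = Rsum l (fun x => Rsum (g x) f).
Proof. induction l; simpl; auto. rewrite Rsum_app, IHl; auto. Qed.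
Lemma Csum_flat_map {X Y} (g : X -> list Y) l f : Csum (flat_map g l) f = Csum l (fun x => Csum (g x) f).
Proof. induction l; simpl; auto. rewrite Csum_app, IHl; auto. Qed.
Lemma Rsum_swap {X Y} (l1 : list X) (l2 : list Y) f :
  Rsum l1 (fun x => Rsum l2 (fun y => f x y)) = Rsum l2 (fun y => Rsum l1 (fun x => f x y)).
Proof. induction l1; simpl.
  - induction l2; simpl; auto. rewrite <- IHl2; ring.
  - rewrite IHl1, <- Rsum_plus. auto. Qed.
Lemma Csum_swap {X Y} (l1 : list X) (l2 : list Y) f :
  Csum l1 (fun x => Csum l2 (fun y => f x y)) = Csum l2 (fun y => Csum l1 (fun x => f x y)).
Proof. induction l1; simpl.
  - rewrite Csum_zero; auto.
  - rewrite IHl1, <- Csum_plus. auto. Qed.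
Definition nrm2 {X} (l : list X) (u : X -> C) : R := Rsum l (fun x => Cnorm2 (u x)).

Lemma Cnorm2_nonneg z : 0 <= Cnorm2 z.
Proof. unfold Cnorm2; nra. Qed.
Lemma Cnorm2_mul a b : Cnorm2 (Cmul a b) = Cnorm2 a * Cnorm2 b.
Proof. unfold Cnorm2; simpl; ring. Qed.
Lemma Cnorm2_scale c b : Cnorm2 (Cscale c b) = c * c * Cnorm2 b.
Proof. unfold Cnorm2; simpl; ring. Qed.
Lemma Cnorm2_C0 : Cnorm2 C0 = 0. Proof. unfold Cnorm2; simpl; ring. Qed.

Lemma nrm2_nonneg {X} (l : list X) u : 0 <= nrm2 l u.
Proof. apply Rsum_nonneg; intros; apply Cnorm2_nonneg. Qed.

Lemma nrm2_ext {X} (l : list X) u v : (forall x, In x l -> u x = v x) -> nrm2 l u = nrm2 l v.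
Proof. intros H; unfold nrm2; apply Rsum_ext; intros; rewrite H; auto. Qed.

Lemma CS {X} (l : list X) f1 f2 g1 g2 :
  (Rsum l (fun x => f1 x * g1 x + f2 x * g2 x))^2 <=
  Rsum l (fun x => f1 x * f1 x + f2 x * f2 x) * Rsum l (fun x => g1 x * g1 x + g2 x * g2 x).
Proof.
  set (A := Rsum l (fun x => f1 x * f1 x + f2 x * f2 x)).
  set (B := Rsum l (fun x => g1 x * g1 x + g2 x * g2 x)).
  set (S := Rsum l (fun x => f1 x * g1 x + f2 x * g2 x)).
  assert (Q : forall a b, 0 <= a*a*A + 2*a*b*S + b*b*B).
  { intros a b.
    assert (E: Rsum l (fun x => (a * f1 x + b * g1 x)*(a * f1 x + b * g1 x) + (a * f2 x + b * g2 x)*(a * f2 x + b * g2 x))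
             = a*a*A + 2*a*b*S + b*b*B).
    { unfold A, B, S.
      transitivity (Rsum l (fun x => a*a*(f1 x * f1 x + f2 x * f2 x) + 2*a*b*(f1 x * g1 x + f2 x * g2 x) + b*b*(g1 x * g1 x + g2 x * g2 x))).
      apply Rsum_ext; intros; ring. rewrite Rsum_plus, Rsum_plus, !Rsum_scal; reflexivity. }
    rewrite <- E. apply Rsum_nonneg; intros x _. pose proof (Rle_0_sqr (a * f1 x + b * g1 x)). pose proof (Rle_0_sqr (a * f2 x + b * g2 x)). unfold Rsqr in *. lra. }
  assert (HA : 0 <= A) by (apply Rsum_nonneg; intros; nra).
  assert (HB : 0 <= B) by (apply Rsum_nonneg; intros; nra).
  pose proof (Q B (-S)) as Q1. pose proof (Q S (-A)) as Q2.
  pose proof (Q 1 1) as Q3. pose proof (Q 1 (-1)) as Q4.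
  destruct (Rle_lt_or_eq_dec 0 A HA) as [HA'|HA'].
  - assert (0 <= A * (A*B - S*S)) by nra.
    assert (0 <= A*B - S*S) by (apply (Rmult_le_reg_l A); nra). nra.
  - destruct (Rle_lt_or_eq_dec 0 B HB) as [HB'|HB'].
    + assert (0 <= B * (A*B - S*S)) by nra.
      assert (0 <= A*B - S*S) by (apply (Rmult_le_reg_l B); nra). nra.
    + subst A B. rewrite <- HA', <- HB' in *. assert (S = 0) by lra. rewrite H. lra.
Qed.

Lemma Cnorm2_add u v : Cnorm2 (Cadd u v) = Cnorm2 u + Cnorm2 v + 2 * (Re u * Re v + Im u * Im v).
Proof. unfold Cnorm2; simpl; ring. Qed.

Lemma sqrt_sum_sq a b : 0 <= a -> 0 <= b -> sqrt (a*a) = a.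
Proof. intros; apply sqrt_square; auto. Qed.

Lemma nrm_triangle {X} (l : list X) u v :
  sqrt (nrm2 l (fun x => Cadd (u x) (v x))) <= sqrt (nrm2 l u) + sqrt (nrm2 l v).
Proof.
  unfold nrm2.
  rewrite (Rsum_ext _ _ (fun x => Cnorm2 (u x) + Cnorm2 (v x) + 2 * (Re (u x) * Re (v x) + Im (u x) * Im (v x))))
    by (intros; apply Cnorm2_add).
  rewrite !Rsum_plus, Rsum_scal.
  set (A := Rsum l (fun x => Cnorm2 (u x))).
  set (B := Rsum l (fun x => Cnorm2 (v x))).
  set (S := Rsum l (fun x => Re (u x) * Re (v x) + Im (u x) * Im (v x))).
  assert (HCS : S^2 <= A * B) by (apply CS).
  assert (HA : 0 <= A) by (apply Rsum_nonneg; intros; apply Cnorm2_nonneg).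
  assert (HB : 0 <= B) by (apply Rsum_nonneg; intros; apply Cnorm2_nonneg).
  assert (HsA := sqrt_sqrt A HA). assert (HsB := sqrt_sqrt B HB).
  assert (0 <= sqrt A) by apply sqrt_pos. assert (0 <= sqrt B) by apply sqrt_pos.
  assert (HS : S <= sqrt A * sqrt B).
  { destruct (Rle_or_lt S 0). nra.
    apply Rsqr_incr_0_var; [|nra]. unfold Rsqr. nra. }
  rewrite <- (sqrt_square (sqrt A + sqrt B)) by lra.
  apply sqrt_le_1_alt. nra.
Qed.

Lemma nrm2_C0 {X} (l : list X) : nrm2 l (fun _ => C0) = 0.
Proof. unfold nrm2; induction l; simpl; auto. rewrite IHl; unfold Cnorm2; simpl; ring. Qed.

Lemma nrm_Csum {X Y} (l : list X) (P : list Y) u :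
  sqrt (nrm2 l (fun x => Csum P (fun p => u p x))) <= Rsum P (fun p => sqrt (nrm2 l (u p))).
Proof.
  induction P; simpl.
  - rewrite nrm2_C0, sqrt_0; lra.
  - eapply Rle_trans; [apply nrm_triangle|]. lra.
Qed.

Lemma nrm2_scal {X} (l : list X) c u : nrm2 l (fun x => Cmul c (u x)) = Cnorm2 c * nrm2 l u.
Proof. unfold nrm2. rewrite <- Rsum_scal. apply Rsum_ext; intros; apply Cnorm2_mul. Qed.

Definition matbound (n : nat) (M : Mat) (a : R) : Prop :=
  0 <= a /\ forall y, nrm2 (seq 0 n) (matvec n M y) <= a*a * nrm2 (seq 0 n) y.
Definition opb (n k : nat) (E : TMat) (c : R) : Prop :=
  0 <= c /\ forall v, nrm2 (tuples n k) (tmatvec n k E v) <= c*c * nrm2 (tuples n k) v.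

Lemma In_tuples_S n k I : In I (tuples n (S k)) <-> exists i I', I = i :: I' /\ (i < n)%nat /\ In I' (tuples n k).
Proof. simpl. rewrite in_flat_map. split.
  - intros [i [Hi HI]]. apply in_map_iff in HI. destruct HI as [I' [<- HI']].
    apply in_seq in Hi. exists i, I'. repeat split; auto; lia.
  - intros [i [I' [-> [Hi HI']]]]. exists i. split. apply in_seq; lia. apply in_map; auto. Qed.

Lemma tuples_length n k I : In I (tuples n k) -> length I = k.
Proof. revert I; induction k; intros I H.
  - simpl in H. destruct H as [<-|[]]; auto.
  - apply In_tuples_S in H. destruct H as [i [I' [-> [_ H]]]]. simpl; f_equal; auto. Qed.

Lemma nrm2_tuples_S n k u : nrm2 (tuples n (S k)) u = Rsum (seq 0 n) (fun i => nrm2 (tuples n k) (fun I => u (i :: I))).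
Proof. unfold nrm2. simpl tuples. rewrite Rsum_flat_map. apply Rsum_ext; intros. rewrite Rsum_map; auto. Qed.

Lemma tmatvec_S n k (E : TMat) v I :
  tmatvec n (S k) E v I = Csum (seq 0 n) (fun j => Csum (tuples n k) (fun J => Cmul (E I (j :: J)) (v (j :: J)))).
Proof. unfold tmatvec. simpl tuples. rewrite Csum_flat_map. apply Csum_ext; intros. rewrite Csum_map; auto. Qed.

Definition K (n k : nat) (M : Mat) (E : TMat) (v : list nat -> C) (I : list nat) : C :=
  match I with
  | i :: I' => Csum (seq 0 n) (fun j => Cmul (M i j) (tmatvec n k E (fun J => v (j :: J)) I'))
  | [] => C0
  end.

Lemma K_bound n k M E v a c : matbound n M a -> opb n k E c ->
  nrm2 (tuples n (S k)) (K n k M E v) <= (a*c)*(a*c) * nrm2 (tuples n (S k)) v.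
Proof.
  intros [Ha HM] [Hc HE].
  rewrite !nrm2_tuples_S. unfold nrm2 at 1. simpl K.
  set (y := fun I j => tmatvec n k E (fun J => v (j :: J)) I).
  change (Rsum (seq 0 n) (fun i => nrm2 (tuples n k) (fun I => matvec n M (y I) i)) <=
    a * c * (a * c) * Rsum (seq 0 n) (fun i => nrm2 (tuples n k) (fun I => v (i :: I)))).
  unfold nrm2. rewrite Rsum_swap.
  apply Rle_trans with (Rsum (tuples n k) (fun I => a * a * nrm2 (seq 0 n) (y I))).
  { apply Rsum_le; intros. apply HM. }
  rewrite Rsum_scal. unfold nrm2. rewrite Rsum_swap.
  apply Rle_trans with (a*a*Rsum (seq 0 n) (fun j => c*c*nrm2 (tuples n k) (fun I => v (j::I)))).
  - apply Rmult_le_compat_l; [nra|]. apply Rsum_le; intros. apply HE.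
  - rewrite Rsum_scal. unfold nrm2. right; ring.
Qed.

Fixpoint pv (x : nat -> C) (I : list nat) : C :=
  match I with [] => C1 | i :: I' => Cmul (x i) (pv x I') end.

Lemma pv_perm x I J : Permutation I J -> pv x I = pv x J.
Proof. induction 1; simpl; auto.
  - rewrite IHPermutation; auto.
  - apply Cext; simpl; ring.
  - congruence. Qed.

Lemma nrm2_pv n k x : nrm2 (tuples n k) (pv x) = (nrm2 (seq 0 n) x) ^ k.
Proof. induction k.
  - unfold nrm2; simpl; unfold Cnorm2; simpl; ring.
  - rewrite nrm2_tuples_S. simpl pv. simpl pow.
    transitivity (Rsum (seq 0 n) (fun i => Cnorm2 (x i) * nrm2 (tuples n k) (pv x))).
    + apply Rsum_ext; intros. rewrite nrm2_scal. auto.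
    + rewrite IHk. unfold nrm2 at 2. rewrite Rmult_comm, <- Rsum_scal. apply Rsum_ext; intros; ring.
Qed.

Fixpoint picks (L : list nat) : list (nat * list nat) :=
  match L with
  | [] => []
  | a :: L' => (a, L') :: map (fun p => (fst p, a :: snd p)) (picks L')
  end.

Lemma picks_length L : length (picks L) = length L.
Proof. induction L; simpl; auto. rewrite length_map; auto. Qed.

Lemma picks_prop L p : In p (picks L) ->
  In (fst p) L /\ (forall x, In x (snd p) -> In x L) /\ length (snd p) = pred (length L).
Proof. revert p; induction L; simpl; intros p H; [contradiction|].
  destruct H as [<-|H]; simpl.
  - repeat split; auto. 
  - apply in_map_iff in H. destruct H as [q [<- Hq]]. destruct (IHL q Hq) as [H1 [H2 H3]].
    simpl. repeat split; auto. intros x [<-|Hx]; auto. rewrite H3. destruct L; simpl in *; auto. contradiction. Qed.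

Fixpoint QM (M : Mat) (Xs : nat -> Mat) (L : list nat) (I J : list nat) {struct I} : C :=
  match I, J with
  | [], [] => match L with [] => C1 | _ => C0 end
  | i :: I', j :: J' => Cadd (Cmul (M i j) (QM M Xs L I' J'))
                         (Csum (picks L) (fun p => Cmul (Xs (fst p) i j) (QM M Xs (snd p) I' J')))
  | _, _ => C0
  end.

Lemma Cmul_Cadd_r a b c : Cmul (Cadd a b) c = Cadd (Cmul a c) (Cmul b c).
Proof. apply Cext; simpl; ring. Qed.
Lemma Cmul_assoc a b c : Cmul (Cmul a b) c = Cmul a (Cmul b c).
Proof. apply Cext; simpl; ring. Qed.
Lemma Cmul_comm a b : Cmul a b = Cmul b a.
Proof. apply Cext; simpl; ring. Qed.
Lemma Csum_mul_r {X} (l : list X) f c : Cmul (Csum l f) c = Csum l (fun x => Cmul (f x) c).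
Proof. rewrite Cmul_comm, Csum_mul_l. apply Csum_ext; intros; apply Cmul_comm. Qed.

Lemma tmatvec_QM_S n k M Xs L v i I :
  tmatvec n (S k) (QM M Xs L) v (i :: I) =
  Cadd (K n k M (QM M Xs L) v (i :: I))
       (Csum (picks L) (fun p => K n k (Xs (fst p)) (QM M Xs (snd p)) v (i :: I))).
Proof.
  rewrite tmatvec_S. unfold K.
  transitivity (Csum (seq 0 n) (fun j => Cadd (Cmul (M i j) (Csum (tuples n k) (fun J => Cmul (QM M Xs L I J) (v (j::J)))))
     (Csum (picks L) (fun p => Cmul (Xs (fst p) i j) (Csum (tuples n k) (fun J => Cmul (QM M Xs (snd p) I J) (v (j::J)))))))).
  - apply Csum_ext; intros j _. rewrite Csum_mul_l.
    transitivity (Csum (tuples n k) (fun J => Cadd (Cmul (M i j) (Cmul (QM M Xs L I J) (v (j::J))))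
       (Csum (picks L) (fun p => Cmul (Xs (fst p) i j) (Cmul (QM M Xs (snd p) I J) (v (j::J))))))).
    + apply Csum_ext; intros J _. simpl QM. rewrite Cmul_Cadd_r, Csum_mul_r, Cmul_assoc. f_equal.
      apply Csum_ext; intros; apply Cmul_assoc.
    + rewrite Csum_plus. f_equal. rewrite Csum_swap. apply Csum_ext; intros. rewrite Csum_mul_l; auto.
  - rewrite Csum_plus. f_equal. rewrite Csum_swap. auto.
Qed.

Fixpoint cc (a : R) (k s : nat) : R :=
  match k with
  | O => match s with O => 1 | _ => 0 end
  | S k' => a * cc a k' s + INR s * cc a k' (pred s)
  end.

Lemma cc_nonneg a k s : 0 <= a -> 0 <= cc a k s.
Proof. intros Ha; revert s; induction k; intros s; simpl.
  - destruct s; lra.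
  - pose proof (IHk s). pose proof (IHk (pred s)). pose proof (pos_INR s). nra. Qed.

Lemma sq_to_sqrt x c N : 0 <= x -> 0 <= c -> 0 <= N -> x <= c*c*N -> sqrt x <= c * sqrt N.
Proof. intros. rewrite <- (sqrt_square c) by auto. rewrite <- sqrt_mult by nra. apply sqrt_le_1_alt; auto. Qed.

Lemma sqrt_to_sq x c N : 0 <= x -> 0 <= N -> sqrt x <= c * sqrt N -> x <= c*c*N.
Proof. intros Hx HN H. pose proof (sqrt_sqrt x Hx). pose proof (sqrt_sqrt N HN). pose proof (sqrt_pos x).
  assert (sqrt x * sqrt x <= (c * sqrt N) * (c * sqrt N)) by nra. nra. Qed.

Lemma QM_opb n a M Xs : matbound n M a ->
  forall k L, (forall b, In b L -> matbound n (Xs b) 1) -> opb n k (QM M Xs L) (cc a k (length L)).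
Proof.
  intros HM k. induction k; intros L HL.
  - split; [destruct L; simpl; lra|]. intros v. unfold nrm2, tmatvec. simpl.
    destruct L; simpl; unfold Cnorm2; simpl; nra.
  - assert (Ha : 0 <= a) by apply HM.
    split; [apply cc_nonneg; auto|]. intros v.
    set (N := nrm2 (tuples n (S k)) v).
    assert (HN : 0 <= N) by apply nrm2_nonneg.
    apply sqrt_to_sq; [apply nrm2_nonneg|auto|].
    rewrite (nrm2_ext _ _ (fun I => Cadd (K n k M (QM M Xs L) v I)
       (Csum (picks L) (fun p => K n k (Xs (fst p)) (QM M Xs (snd p)) v I)))).
    2:{ intros I HI. apply In_tuples_S in HI. destruct HI as [i [I' [-> _]]]. apply tmatvec_QM_S. }
    eapply Rle_trans; [apply nrm_triangle|].
    eapply Rle_trans; [apply Rplus_le_compat_l; apply nrm_Csum|].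
    assert (H1 : sqrt (nrm2 (tuples n (S k)) (K n k M (QM M Xs L) v)) <= a * cc a k (length L) * sqrt N).
    { apply sq_to_sqrt; auto. apply nrm2_nonneg. pose proof (cc_nonneg a k (length L) Ha). nra.
      apply K_bound; auto. }
    assert (H2 : Rsum (picks L) (fun p => sqrt (nrm2 (tuples n (S k)) (K n k (Xs (fst p)) (QM M Xs (snd p)) v)))
              <= Rsum (picks L) (fun p => cc a k (pred (length L)) * sqrt N)).
    { apply Rsum_le. intros p Hp. destruct (picks_prop L p Hp) as [P1 [P2 P3]].
      apply sq_to_sqrt; auto. apply nrm2_nonneg. apply cc_nonneg; auto.
      rewrite <- P3. replace (cc a k (length (snd p))) with (1 * cc a k (length (snd p))) by ring.
      apply K_bound; auto. }
    rewrite Rsum_const, picks_length in H2. simpl cc. cbv beta. replace ((a * cc a k (length L) + INR (length L) * cc a k (Init.Nat.pred (length L))) * sqrt N) with (a * cc a k (length L) * sqrt N + INR (length L) * (cc a k (Init.Nat.pred (length L)) * sqrt N)) by ring. apply Rplus_le_compat; [exact H1|]. exact H2.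
Qed.

Definition HasD (j : nat) (F F' : (nat -> R) -> C) : Prop :=
  forall t, derivable_pt_lim (fun s => Re (F (upd t j s))) (t j) (Re (F' t)) /\
            derivable_pt_lim (fun s => Im (F (upd t j s))) (t j) (Im (F' t)).

Lemma upd_same t j : upd t j (t j) = t.
Proof. apply functional_extensionality; intros i. unfold upd. destruct (Nat.eqb_spec i j); subst; auto. Qed.

Lemma dpl_ext f x l1 l2 : l1 = l2 -> derivable_pt_lim f x l1 -> derivable_pt_lim f x l2.
Proof. intros ->; auto. Qed.
Lemma dpl_plus f g x l1 l2 : derivable_pt_lim f x l1 -> derivable_pt_lim g x l2 ->
  derivable_pt_lim (fun s => f s + g s) x (l1 + l2).
Proof. intros; apply (derivable_pt_lim_plus f g); auto. Qed.
Lemma dpl_minus f g x l1 l2 : derivable_pt_lim f x l1 -> derivable_pt_lim g x l2 ->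
  derivable_pt_lim (fun s => f s - g s) x (l1 - l2).
Proof. intros; apply (derivable_pt_lim_minus f g); auto. Qed.
Lemma dpl_mult f g x l1 l2 : derivable_pt_lim f x l1 -> derivable_pt_lim g x l2 ->
  derivable_pt_lim (fun s => f s * g s) x (l1 * g x + f x * l2).
Proof. intros; apply (derivable_pt_lim_mult f g); auto. Qed.
Lemma dpl_const c x : derivable_pt_lim (fun _ => c) x 0.
Proof. apply (derivable_pt_lim_const c). Qed.
Lemma dpl_id x : derivable_pt_lim (fun s => s) x 1.
Proof. apply derivable_pt_lim_id. Qed.

Lemma HasD_ext j F F' G' : (forall t, F' t = G' t) -> HasD j F F' -> HasD j F G'.
Proof. intros E H t. rewrite <- E. apply H. Qed.

Lemma HasD_const j z : HasD j (fun _ => z) (fun _ => C0).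
Proof. intros t; split; simpl; apply dpl_const. Qed.

Lemma HasD_add j F F' G G' : HasD j F F' -> HasD j G G' ->
  HasD j (fun t => Cadd (F t) (G t)) (fun t => Cadd (F' t) (G' t)).
Proof. intros HF HG t. destruct (HF t), (HG t). simpl; split; apply dpl_plus; auto. Qed.

Lemma HasD_mul j F F' G G' : HasD j F F' -> HasD j G G' ->
  HasD j (fun t => Cmul (F t) (G t)) (fun t => Cadd (Cmul (F' t) (G t)) (Cmul (F t) (G' t))).
Proof. intros HF HG t. destruct (HF t) as [F1 F2], (HG t) as [G1 G2]. simpl. split.
  - eapply dpl_ext; [|apply dpl_minus; apply dpl_mult; eauto].
    cbv beta. rewrite !upd_same. ring.
  - eapply dpl_ext; [|apply dpl_plus; apply dpl_mult; eauto].
    cbv beta. rewrite !upd_same. ring. Qed.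

Lemma HasD_Csum {X} j (l : list X) F F' : (forall x, In x l -> HasD j (F x) (F' x)) ->
  HasD j (fun t => Csum l (fun x => F x t)) (fun t => Csum l (fun x => F' x t)).
Proof. induction l; simpl; intros H.
  - apply HasD_const.
  - apply HasD_add; auto. Qed.

Lemma HasD_var j l Y : HasD j (fun t => Cscale (t l) Y) (fun _ => if Nat.eqb l j then Y else C0).
Proof. intros t. unfold upd. simpl. destruct (Nat.eqb_spec l j).
  - split; (eapply dpl_ext; [|apply dpl_mult; [apply dpl_id|apply dpl_const]]); cbv beta; ring.
  - simpl.
    split; apply dpl_const. Qed.

Lemma Csum_delta m j (Y : nat -> C) : (j < m)%nat ->
  Csum (seq 0 m) (fun l => if Nat.eqb l j then Y l else C0) = Y j.
Proof. induction m; intros H; [lia|]. rewrite seq_S, Csum_app. simpl.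
  destruct (Nat.eqb_spec m j).
  - subst. rewrite (Csum_ext _ _ (fun _ => C0)), Csum_zero.
    + apply Cext; simpl; ring.
    + intros l Hl. apply in_seq in Hl. destruct (Nat.eqb_spec l j); auto; lia.
  - rewrite IHm by lia. apply Cext; simpl; ring. Qed.

Lemma HasD_perturb m A Xs j a b : (j < m)%nat ->
  HasD j (fun t => perturb m A Xs t a b) (fun _ => Xs j a b).
Proof. intros Hj. unfold perturb.
  eapply HasD_ext; [|apply HasD_add; [apply HasD_const|apply (HasD_Csum j (seq 0 m) (fun l t => Cscale (t l) (Xs l a b)) (fun l _ => if Nat.eqb l j then Xs l a b else C0))]].
  - intros t. simpl. rewrite (Csum_delta m j (fun l => Xs l a b)) by auto. apply Cext; simpl; ring.
  - intros; apply HasD_var.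
Qed.

Lemma HasD_QM m A Xs j : (j < m)%nat -> forall I J L,
  HasD j (fun t => QM (perturb m A Xs t) Xs L I J) (fun t => QM (perturb m A Xs t) Xs (j :: L) I J).
Proof.
  intros Hj I. induction I as [|i I IH]; intros J L.
  - destruct J; simpl.
    + destruct L; apply HasD_const.
    + apply HasD_const.
  - destruct J as [|j' J]; simpl; [apply HasD_const|].
    eapply HasD_ext; [|apply HasD_add; [apply HasD_mul; [apply HasD_perturb; auto|apply IH]|
      apply (HasD_Csum j (picks L) (fun p t => Cmul (Xs (fst p) i j') (QM (perturb m A Xs t) Xs (snd p) I J))
         (fun p t => Cadd (Cmul C0 (QM (perturb m A Xs t) Xs (snd p) I J)) (Cmul (Xs (fst p) i j') (QM (perturb m A Xs t) Xs (j :: snd p) I J))))]].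
    + intros t. simpl. rewrite Csum_map.
      rewrite (Csum_ext (picks L) (fun x => Cadd (Cmul C0 (QM (perturb m A Xs t) Xs (snd x) I J))
        (Cmul (Xs (fst x) i j') (QM (perturb m A Xs t) Xs (j :: snd x) I J)))
        (fun x => Cmul (Xs (fst x) i j') (QM (perturb m A Xs t) Xs (j :: snd x) I J))).
      * apply Cext; simpl; ring.
      * intros; apply Cext; simpl; ring.
    + intros p _. apply (HasD_mul j (fun _ => Xs (fst p) i j') (fun _ => C0)); [apply HasD_const|apply IH].
Qed.

Lemma partial_eq j (f g : (nat -> R) -> R) :
  (forall t, derivable_pt_lim (fun s => f (upd t j s)) (t j) (g t)) -> partial j f = g.
Proof. intros H. apply functional_extensionality; intros t. unfold partial.
  pose proof (epsilon_spec (inhabits 0) (fun l => derivable_pt_lim (fun s => f (upd t j s)) (t j) l)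
     (ex_intro _ (g t) (H t))) as H1.
  eapply uniqueness_limite; eauto. Qed.

Lemma iter_QM m A Xs I J : forall m', (m' <= m)%nat ->
  iter_partial m' (fun t => Re (QM (perturb m A Xs t) Xs [] I J)) =
    (fun t => Re (QM (perturb m A Xs t) Xs (rev (seq 0 m')) I J)) /\
  iter_partial m' (fun t => Im (QM (perturb m A Xs t) Xs [] I J)) =
    (fun t => Im (QM (perturb m A Xs t) Xs (rev (seq 0 m')) I J)).
Proof.
  induction m'; intros H; [simpl; auto|]. cbn [iter_partial].
  destruct IHm' as [E1 E2]; [lia|]. rewrite E1, E2.
  replace (rev (seq 0 (S m'))) with (m' :: rev (seq 0 m')) by (rewrite seq_S, rev_app_distr; reflexivity).
  split; apply partial_eq; intros t; apply (HasD_QM m A Xs m' ltac:(lia) I J (rev (seq 0 m')) t).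
Qed.

Lemma Cprod_map {X Y} (g : X -> Y) l f : Cprod (map g l) f = Cprod l (fun x => f (g x)).
Proof. induction l; simpl; auto. rewrite IHl; auto. Qed.

Lemma tensor_QM M Xs : forall I J, length I = length J -> tensor_pow (length I) M I J = QM M Xs [] I J.
Proof. induction I as [|i I IH]; intros J HJ; destruct J as [|j J]; simpl in *; try discriminate.
  - reflexivity.
  - unfold tensor_pow in *. simpl. rewrite <- seq_shift, Cprod_map. simpl.
    rewrite IH by lia. apply Cext; simpl; ring. Qed.

Lemma perturb0 m A Xs : perturb m A Xs (fun _ => 0) = A.
Proof. apply functional_extensionality; intros i; apply functional_extensionality; intros j.
  unfold perturb. apply Cext; simpl; rewrite ?Re_Csum, ?Im_Csum; simpl;
  rewrite (Rsum_ext _ _ (fun _ => 0)), Rsum_const by (intros; ring); ring. Qed.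

Lemma D_sympow_QM m k A Xs I J : length I = k -> length J = k ->
  D_sympow m k A Xs I J = QM A Xs (rev (seq 0 m)) I J.
Proof. intros HI HJ. unfold D_sympow, mixed_deriv_at0.
  assert (E : forall t, tensor_pow k (perturb m A Xs t) I J = QM (perturb m A Xs t) Xs [] I J).
  { intros t. subst k. apply tensor_QM. congruence. }
  replace (fun t => Re (tensor_pow k (perturb m A Xs t) I J)) with (fun t => Re (QM (perturb m A Xs t) Xs [] I J))
    by (apply functional_extensionality; intros t; rewrite E; auto).
  replace (fun t => Im (tensor_pow k (perturb m A Xs t) I J)) with (fun t => Im (QM (perturb m A Xs t) Xs [] I J))
    by (apply functional_extensionality; intros t; rewrite E; auto). destruct (iter_QM m A Xs I J m (le_n m)) as [E1 E2]. rewrite E1, E2.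
  rewrite perturb0. destruct (QM A Xs (rev (seq 0 m)) I J); reflexivity. Qed.

Definition Cconj (z : C) : C := mkC (Re z) (- Im z).

Lemma Cnorm2_zero z : Cnorm2 z = 0 -> z = C0.
Proof. unfold Cnorm2; intros H. destruct z as [a b]; simpl in *. assert (a = 0) by nra. assert (b = 0) by nra. subst; reflexivity. Qed.

Lemma matvec_scale n M c y i : matvec n M (fun j => Cscale c (y j)) i = Cscale c (matvec n M y i).
Proof. unfold matvec. apply Cext; simpl; rewrite ?Re_Csum, ?Im_Csum, <- ?Rsum_scal; apply Rsum_ext; intros; simpl; ring. Qed.

Definition e0 : nat -> C := fun j => if Nat.eqb j 0 then C1 else C0.

Lemma nrm2_e0 n : (1 <= n)%nat -> nrm2 (seq 0 n) e0 = 1.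
Proof. intros H. destruct n; [lia|]. unfold nrm2. simpl. 
  rewrite (Rsum_ext _ _ (fun _ => 0)), Rsum_const.
  - unfold e0, Cnorm2; simpl; ring.
  - intros j Hj. apply in_seq in Hj. unfold e0. destruct (Nat.eqb_spec j 0); [lia|]. unfold Cnorm2; simpl; ring. Qed.

Lemma opnorm_nonneg n M a : (1 <= n)%nat -> is_opnorm n M a -> 0 <= a.
Proof. intros Hn [Hub _]. eapply Rle_trans; [|apply (Hub (vnorm n (matvec n M e0)))].
  apply sqrt_pos. exists e0. split; auto. unfold vnorm. change (sqrt (nrm2 (seq 0 n) e0) = 1).
  rewrite nrm2_e0; auto. apply sqrt_1. Qed.

Lemma opnorm_matbound n M a : (1 <= n)%nat -> is_opnorm n M a -> matbound n M a.
Proof.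
  intros Hn HM. split; [eapply opnorm_nonneg; eauto|]. intros y.
  set (r := nrm2 (seq 0 n) y). assert (Hr : 0 <= r) by apply nrm2_nonneg.
  destruct (Rle_lt_or_eq_dec 0 r Hr) as [Hr'|Hr'].
  - set (z := fun j => Cscale (/ sqrt r) (y j)).
    assert (Hsr : 0 < sqrt r) by (apply sqrt_lt_R0; auto).
    assert (Hz : nrm2 (seq 0 n) z = 1).
    { unfold nrm2, z. rewrite (Rsum_ext _ _ (fun j => (/ sqrt r * / sqrt r) * Cnorm2 (y j))).
      rewrite Rsum_scal. fold (nrm2 (seq 0 n) y). fold r. rewrite <- Rinv_mult, sqrt_sqrt by lra. field; lra.
      intros; apply Cnorm2_scale. }
    assert (HMz : nrm2 (seq 0 n) (matvec n M z) = / r * nrm2 (seq 0 n) (matvec n M y)).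
    { unfold nrm2. rewrite <- Rsum_scal. apply Rsum_ext; intros. unfold z. rewrite matvec_scale, Cnorm2_scale.
      rewrite <- Rinv_mult, sqrt_sqrt by lra. auto. }
    destruct HM as [Hub _].
    assert (H1 : sqrt (nrm2 (seq 0 n) (matvec n M z)) <= a).
    { apply Hub. exists z. split; auto. unfold vnorm. change (sqrt (nrm2 (seq 0 n) z) = 1). rewrite Hz; apply sqrt_1. }
    assert (H2 : nrm2 (seq 0 n) (matvec n M z) <= a * a * 1).
    { apply sqrt_to_sq; [apply nrm2_nonneg|lra|]. rewrite sqrt_1. lra. }
    rewrite HMz in H2. assert (0 <= nrm2 (seq 0 n) (matvec n M y)) by apply nrm2_nonneg.
    apply (Rmult_le_reg_l (/ r)). apply Rinv_0_lt_compat; auto.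
    replace (/ r * (a * a * r)) with (a * a * 1) by (field; lra). auto.
  - assert (Hy : forall j, In j (seq 0 n) -> y j = C0).
    { intros j Hj. apply Cnorm2_zero. apply (Rsum_nonneg_zero (seq 0 n) (fun j => Cnorm2 (y j))); auto.
      intros; apply Cnorm2_nonneg. }
    assert (nrm2 (seq 0 n) (matvec n M y) = 0).
    { rewrite (nrm2_ext _ _ (fun _ => C0)). apply nrm2_C0.
      intros i _. unfold matvec. rewrite (Csum_ext _ _ (fun _ => C0)). apply Csum_zero.
      intros j Hj. rewrite Hy; auto. apply Cext; simpl; ring. }
    rewrite H, <- Hr'. lra.
Qed.

Definition ip (n : nat) (x y : nat -> C) : C := Csum (seq 0 n) (fun j => Cmul (Cconj (x j)) (y j)).

Lemma ip_CS n x y : Cnorm2 (ip n x y) <= nrm2 (seq 0 n) x * nrm2 (seq 0 n) y.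
Proof.
  set (z := ip n x y). set (a := Re z). set (b := Im z).
  assert (Ha : a = Rsum (seq 0 n) (fun j => Re (x j) * Re (y j) + Im (x j) * Im (y j))).
  { unfold a, z, ip. rewrite Re_Csum. apply Rsum_ext; intros; simpl; ring. }
  assert (Hb : b = Rsum (seq 0 n) (fun j => Re (x j) * Im (y j) - Im (x j) * Re (y j))).
  { unfold b, z, ip. rewrite Im_Csum. apply Rsum_ext; intros; simpl; ring. }
  pose proof (CS (seq 0 n) (fun j => a * Re (x j) - b * Im (x j)) (fun j => a * Im (x j) + b * Re (x j))
                (fun j => Re (y j)) (fun j => Im (y j))) as H.
  assert (E1 : Rsum (seq 0 n) (fun j => (a * Re (x j) - b * Im (x j)) * Re (y j) + (a * Im (x j) + b * Re (x j)) * Im (y j))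
     = a * a + b * b).
  { rewrite Ha at 2. rewrite Hb at 2. rewrite <- !Rsum_scal, <- Rsum_plus. apply Rsum_ext; intros; ring. }
  assert (E2 : Rsum (seq 0 n) (fun j => (a * Re (x j) - b * Im (x j)) * (a * Re (x j) - b * Im (x j)) +
       (a * Im (x j) + b * Re (x j)) * (a * Im (x j) + b * Re (x j))) = (a*a+b*b) * nrm2 (seq 0 n) x).
  { unfold nrm2. rewrite <- Rsum_scal. apply Rsum_ext; intros; unfold Cnorm2; ring. }
  assert (E3 : Rsum (seq 0 n) (fun j => Re (y j) * Re (y j) + Im (y j) * Im (y j)) = nrm2 (seq 0 n) y) by reflexivity.
  cbv beta in H. rewrite E1, E2, E3 in H.
  change (Cnorm2 z) with (a * a + b * b).
  assert (0 <= a*a+b*b) by nra.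
  destruct (Rle_lt_or_eq_dec 0 (a*a+b*b) H0) as [Hp|Hp].
  - apply (Rmult_le_reg_l (a*a+b*b)); auto. nra.
  - rewrite <- Hp. apply Rmult_le_pos; apply nrm2_nonneg.
Qed.

Lemma cc_zero a k s : (k < s)%nat -> cc a k s = 0.
Proof. revert s; induction k; intros s H; simpl.
  - destruct s; [lia|auto].
  - rewrite IHk by lia. rewrite (IHk (pred s)) by lia. ring. Qed.

Lemma cc_closed a k s : (s <= k)%nat -> cc a k s = INR (fact k) / INR (fact (k - s)) * a ^ (k - s).
Proof.
  revert s; induction k; intros s H.
  - assert (s = 0%nat) by lia; subst. simpl. field.
  - cbn [cc]. destruct s as [|s'].
    + simpl pred. rewrite IHk by lia. rewrite !Nat.sub_0_r. simpl INR at 1. 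
      pose proof (INR_fact_neq_0 k). pose proof (INR_fact_neq_0 (S k)).
      replace (S k - 0)%nat with (S k) by lia. simpl pow. change (INR 0) with 0. field. split; auto.
    + simpl pred. destruct (Nat.eq_dec s' k) as [->|Hne].
      * rewrite cc_zero by lia. rewrite IHk by lia. rewrite !Nat.sub_diag.
        replace (S k - S k)%nat with 0%nat by lia. simpl fact. simpl pow.
        rewrite plus_INR, mult_INR, S_INR. change (INR 1) with 1. field.
      * destruct (Nat.le_exists_sub (S s') k ltac:(lia)) as [d [Hd _]].
        rewrite !IHk by lia.
        replace (k - S s')%nat with d by lia. replace (k - s')%nat with (S d) by lia.
        replace (S k - S s')%nat with (S d) by lia.
        pose proof (INR_fact_neq_0 d). pose proof (INR_fact_neq_0 k).
        change (fact (S d)) with (S d * fact d)%nat. change (fact (S k)) with (S k * fact k)%nat.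
        rewrite !mult_INR. simpl pow.
        assert (INR (S k) = INR d + INR (S s') + 1) by (rewrite Hd, S_INR, plus_INR; ring).
        rewrite H2, !S_INR. assert (0 <= INR d) by apply pos_INR.
        field. lra.
Qed.

Lemma cc_cont k s : continuity (fun a => cc a k s).
Proof. revert s; induction k; intros s; simpl.
  - apply continuity_const. intros x y; reflexivity.
  - apply (continuity_plus (fun a => a * cc a k s) (fun a => INR s * cc a k (pred s))).
    + apply (continuity_mult (fun a => a) (fun a => cc a k s)); auto. apply derivable_continuous, derivable_id.
    + apply (continuity_mult (fun _ => INR s) (fun a => cc a k (pred s))); auto.
      apply continuity_const. intros x y; reflexivity.
Qed.

Definition rk1 (w x : nat -> C) : Mat := fun i j => Cmul (w i) (Cconj (x j)).

Lemma matvec_rk1 n w x y i : matvec n (rk1 w x) y i = Cmul (w i) (ip n x y).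
Proof. unfold matvec, rk1, ip. rewrite Csum_mul_l. apply Csum_ext; intros. apply Cmul_assoc. Qed.

Lemma ip_self n x : nrm2 (seq 0 n) x = 1 -> ip n x x = C1.
Proof. intros H. apply Cext; unfold ip; simpl; [rewrite Re_Csum|rewrite Im_Csum].
  - rewrite <- H. unfold nrm2. apply Rsum_ext; intros; unfold Cnorm2; simpl; ring.
  - rewrite (Rsum_ext _ _ (fun _ => 0)), Rsum_const. ring. intros; simpl; ring. Qed.

Lemma rk1_opnorm n w x : nrm2 (seq 0 n) w = 1 -> nrm2 (seq 0 n) x = 1 -> is_opnorm n (rk1 w x) 1.
Proof.
  intros Hw Hx. split.
  - intros s [y [Hy ->]]. unfold vnorm in *. change (sqrt (nrm2 (seq 0 n) y) = 1) in Hy.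
    assert (Hy2 : nrm2 (seq 0 n) y = 1).
    { rewrite <- (sqrt_sqrt (nrm2 (seq 0 n) y)) by apply nrm2_nonneg. rewrite Hy. ring. }
    change (sqrt (nrm2 (seq 0 n) (matvec n (rk1 w x) y)) <= 1). rewrite <- sqrt_1. apply sqrt_le_1_alt.
    rewrite (nrm2_ext _ _ (fun i => Cmul (ip n x y) (w i))) by (intros; rewrite matvec_rk1; apply Cmul_comm).
    rewrite nrm2_scal, Hw. pose proof (ip_CS n x y). rewrite Hx, Hy2 in H. lra.
  - intros b Hb. apply Hb. exists x. split.
    + unfold vnorm. change (sqrt (nrm2 (seq 0 n) x) = 1). rewrite Hx; apply sqrt_1.
    + unfold vnorm. change (1 = sqrt (nrm2 (seq 0 n) (matvec n (rk1 w x) x))).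
      rewrite (nrm2_ext _ _ w). rewrite Hw, sqrt_1; auto.
      intros; rewrite matvec_rk1, ip_self by auto. apply Cext; simpl; ring.
Qed.

Lemma K_pv n k M E x i I : K n k M E (pv x) (i :: I) = Cmul (matvec n M x i) (tmatvec n k E (pv x) I).
Proof. unfold K, matvec. rewrite Csum_mul_r. apply Csum_ext; intros j _.
  rewrite Cmul_assoc. f_equal. unfold tmatvec. simpl pv. rewrite Csum_mul_l. apply Csum_ext; intros.
  apply Cext; simpl; ring. Qed.

Lemma QM_pv n A x w mu : nrm2 (seq 0 n) x = 1 ->
  (forall i, (i < n)%nat -> matvec n A x i = Cscale mu (w i)) ->
  forall k L I, In I (tuples n k) ->
  tmatvec n k (QM A (fun _ => rk1 w x) L) (pv x) I = Cscale (cc mu k (length L)) (pv w I).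
Proof.
  intros Hx HA k. induction k; intros L I HI.
  - simpl in HI. destruct HI as [<-|[]]. unfold tmatvec. simpl.
    destruct L; simpl; apply Cext; simpl; ring.
  - apply In_tuples_S in HI. destruct HI as [i [I' [-> [Hi HI']]]].
    rewrite tmatvec_QM_S, K_pv, IHk, HA by auto.
    rewrite (Csum_ext _ _ (fun _ => Cmul (w i) (Cscale (cc mu k (pred (length L))) (pv w I')))).
    + rewrite Csum_const, picks_length. simpl. apply Cext; simpl; ring.
    + intros p Hp. rewrite K_pv, IHk by auto. rewrite matvec_rk1, ip_self by auto.
      destruct (picks_prop L p Hp) as [_ [_ ->]]. apply Cext; simpl; ring.
Qed.

Lemma tmatvec_D_QM n m k A Xs v I : In I (tuples n k) ->
  tmatvec n k (D_sympow m k A Xs) v I = tmatvec n k (QM A Xs (rev (seq 0 m))) v I.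
Proof. intros HI. unfold tmatvec. apply Csum_ext; intros J HJ.
  rewrite D_sympow_QM; auto; eapply tuples_length; eauto. Qed.

Lemma D_bound n m k A Xs a : (1 <= n)%nat -> is_opnorm n A a ->
  (forall l, (l < m)%nat -> is_opnorm n (Xs l) 1) ->
  forall v, tnorm n k (tmatvec n k (D_sympow m k A Xs) v) <= cc a k m * tnorm n k v.
Proof.
  intros Hn HA HX v. unfold tnorm.
  change (sqrt (nrm2 (tuples n k) (tmatvec n k (D_sympow m k A Xs) v)) <= cc a k m * sqrt (nrm2 (tuples n k) v)).
  rewrite (nrm2_ext _ _ (tmatvec n k (QM A Xs (rev (seq 0 m))) v)) by (intros; apply tmatvec_D_QM; auto).
  assert (Hlen : length (rev (seq 0 m)) = m) by (rewrite length_rev, length_seq; auto).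
  destruct (QM_opb n a A Xs (opnorm_matbound n A a Hn HA) k (rev (seq 0 m))) as [Hc Hb].
  { intros b Hb. apply opnorm_matbound; auto. apply HX. apply in_rev, in_seq in Hb. lia. }
  rewrite Hlen in Hc, Hb.
  apply sq_to_sqrt; auto; apply nrm2_nonneg.
Qed.

Lemma achieve n m k A a x b : (1 <= n)%nat -> is_opnorm n A a -> nrm2 (seq 0 n) x = 1 ->
  (forall s, (exists Xs : nat -> Mat, (forall l, (l < m)%nat -> is_opnorm n (Xs l) 1) /\
              is_sym_opnorm n k (D_sympow m k A Xs) s) -> s <= b) ->
  cc (vnorm n (matvec n A x)) k m <= b.
Proof.
  intros Hn HA Hx Hb.
  set (mu := vnorm n (matvec n A x)).
  assert (Hmu : 0 <= mu) by apply sqrt_pos.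
  assert (Hw : exists w, nrm2 (seq 0 n) w = 1 /\ forall i, (i < n)%nat -> matvec n A x i = Cscale mu (w i)).
  { assert (Hmu2 : nrm2 (seq 0 n) (matvec n A x) = mu * mu).
    { unfold mu, vnorm. rewrite sqrt_sqrt; auto. apply nrm2_nonneg. }
    destruct (Rle_lt_or_eq_dec 0 mu Hmu) as [Hp|Hz].
    - exists (fun j => Cscale (/ mu) (matvec n A x j)). split.
      + unfold nrm2. rewrite (Rsum_ext _ _ (fun j => (/mu * /mu) * Cnorm2 (matvec n A x j))).
        rewrite Rsum_scal. change (/ mu * / mu * nrm2 (seq 0 n) (matvec n A x) = 1). rewrite Hmu2. field; lra.
        intros; apply Cnorm2_scale.
      + intros i _. apply Cext; simpl; field; lra.
    - exists x. split; auto. intros i Hi. rewrite <- Hz.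
      assert (Cnorm2 (matvec n A x i) = 0).
      { apply (Rsum_nonneg_zero (seq 0 n) (fun i => Cnorm2 (matvec n A x i))).
        intros; apply Cnorm2_nonneg. change (nrm2 (seq 0 n) (matvec n A x) = 0). rewrite Hmu2, <- Hz; ring.
        apply in_seq; lia. }
      rewrite (Cnorm2_zero _ H). apply Cext; simpl; ring. }
  destruct Hw as [w [Hw1 Hw2]].
  set (Xs := fun _ : nat => rk1 w x).
  assert (HXs : forall l, (l < m)%nat -> is_opnorm n (Xs l) 1) by (intros; apply rk1_opnorm; auto).
  set (Sin := fun s => exists v, symmetric_tensor n k v /\ tnorm n k v = 1 /\
                             s = tnorm n k (tmatvec n k (D_sympow m k A Xs) v)).
  assert (Hpv : tnorm n k (pv x) = 1).
  { unfold tnorm. change (sqrt (nrm2 (tuples n k) (pv x)) = 1). rewrite nrm2_pv, Hx, pow1. apply sqrt_1. }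
  assert (Hval : tnorm n k (tmatvec n k (D_sympow m k A Xs) (pv x)) = cc mu k m).
  { unfold tnorm. change (sqrt (nrm2 (tuples n k) (tmatvec n k (D_sympow m k A Xs) (pv x))) = cc mu k m).
    rewrite (nrm2_ext _ _ (fun I => Cscale (cc mu k m) (pv w I))).
    - unfold nrm2. rewrite (Rsum_ext _ _ (fun I => cc mu k m * cc mu k m * Cnorm2 (pv w I))) by (intros; apply Cnorm2_scale).
      rewrite Rsum_scal. change (sqrt (cc mu k m * cc mu k m * nrm2 (tuples n k) (pv w)) = cc mu k m).
      rewrite nrm2_pv, Hw1, pow1, Rmult_1_r. apply sqrt_square. apply cc_nonneg; auto.
    - intros I HI. rewrite tmatvec_D_QM by auto.
      replace m with (length (rev (seq 0 m))) at 2 by (rewrite length_rev, length_seq; auto).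
      apply QM_pv; auto. }
  assert (Hbd : bound Sin).
  { exists (cc a k m * 1). intros s [v [_ [Hv ->]]]. rewrite <- Hv. apply D_bound; auto. }
  assert (Hne : exists s, Sin s).
  { exists (tnorm n k (tmatvec n k (D_sympow m k A Xs) (pv x))). exists (pv x). repeat split; auto.
    intros I J _ HP. apply pv_perm; auto. }
  destruct (completeness Sin Hbd Hne) as [s0 Hs0].
  apply Rle_trans with s0.
  - rewrite <- Hval. apply Hs0. exists (pv x). repeat split; auto. intros I J _ HP. apply pv_perm; auto.
  - apply Hb. exists Xs. split; auto.
Qed.

Theorem theorem3p3 (n m k : nat) (A : Mat) (normA : R)
  (Hm1 : (1 <= m)%nat) (Hmk : (m <= k)%nat) (Hkn : (k <= n)%nat)
  (HnormA : is_opnorm n A normA) :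
  is_D_sympow_norm n m k A
    (INR (fact k) / INR (fact (k - m)) * normA ^ (k - m)).
Proof.
  assert (Hn : (1 <= n)%nat) by lia.
  assert (Ha : 0 <= normA) by (eapply opnorm_nonneg; eauto).
  rewrite <- cc_closed by auto.
  split.
  - intros s [Xs [HXs Hs]]. apply Hs. intros s' [v [_ [Hv ->]]].
    rewrite <- (Rmult_1_r (cc normA k m)). rewrite <- Hv. apply D_bound; auto.
  - intros b Hb. apply Rnot_lt_le. intros Hlt.
    destruct (cc_cont k m normA (cc normA k m - b) ltac:(lra)) as [d [Hd Hd']].
    destruct (classic (exists x, nrm2 (seq 0 n) x = 1 /\ normA - d < vnorm n (matvec n A x))) as [[x [Hx Hxa]]|Hno].
    + pose proof (achieve n m k A normA x b Hn HnormA Hx Hb) as Hach.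
      set (mu := vnorm n (matvec n A x)) in *.
      assert (Hmua : mu <= normA).
      { apply HnormA. exists x. split; auto. unfold vnorm. change (sqrt (nrm2 (seq 0 n) x) = 1). rewrite Hx; apply sqrt_1. }
      destruct (Req_dec mu normA) as [E|E].
      * rewrite E in Hach. lra.
      * assert (Hdist : R_dist (cc mu k m) (cc normA k m) < cc normA k m - b).
        { apply Hd'. split. split; [constructor|auto]. simpl. unfold R_dist. rewrite Rabs_left1; lra. }
        unfold R_dist in Hdist. apply Rabs_def2 in Hdist. lra.
    + assert (normA <= normA - d).
      { apply HnormA. intros s [x [Hx ->]]. apply Rnot_lt_le. intros Hlt2. apply Hno. exists x. split; auto.
        unfold vnorm in Hx. change (sqrt (nrm2 (seq 0 n) x) = 1) in Hx.
        rewrite <- (sqrt_sqrt (nrm2 (seq 0 n) x)) by apply nrm2_nonneg. rewrite Hx. ring. }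
      lra.
Qed.
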